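(* Let $p\neq 2$ be a prime and $G=Z_{p^{\lambda_1}}\times\cdots\times Z_{p^{\lambda_n}}$ with $0<\lambda_1<\cdots<\lambda_n$. If $n\ge 2$ and $\lambda_n-\lambda_{n-1}\ge 2$, then $J(G)$ has precisely two maximal down-set chains, namely $D_1(G)=\{J(i,1):i\in\{1,\dots,n\}\}$ and $D_2(G)=\{J(n,j):j\in\{1,\dots,\lambda_n-\lambda_{n-1}\}\}$.
   Context: Tuples are ordered componentwise; for $\mathbf 0\le\mathbf a\le(\lambda_1,\dots,\lambda_n)$, $T(\mathbf a)$ is the set of $(g_1,\dots,g_n)\in G$ with $|g_i|=p^{a_i}$, and $R(\mathbf a)=\bigcup_{\mathbf b\le\mathbf a}T(\mathbf b)$. For $i\in\{1,\dots,n\}$ and $j\in\{1,\dots,\lambda_i\}$, $J(i,j)=R(\mathbf a)$ where $a_k=j$ for $k\ge i$ and $a_k=\max\{0,\,j-(\lambda_i-\lambda_k)\}$ for $k<i$. $J(G)$ is the set of all $J(i,j)$, partially ordered by inclusion. A down set of a poset $P$ is a subset $X$ such that $x\le y\in X$ implies $x\in X$; a down-set chain is a subset that is both a chain and a down set; it is maximal if it is not contained in a strictly larger down-set chain. *)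

(* Defs.v *)
From mathcomp Require Import all_boot all_order all_algebra all_fingroup.
Set Implicit Arguments. Unset Strict Implicit. Unset Printing Implicit Defensive.

(* Indices are 0-based: paper's index i in {1..n} is our i-1 in {0..n-1};
   lam : nat -> nat, with lam k the paper's lambda_{k+1}. *)

Section Defs.
Variables (p n : nat) (lam : nat -> nat).

Notation G := {dffun forall k : 'I_n, 'Z_(p ^ lam k)}.

Definition Tset (a : 'I_n -> nat) : {set G} :=
  [set g : G | [forall k, #[g k]%g == p ^ a k]].

(* R(a) = union of T(b) over b <= a (componentwise); the union over tuples b
   is written componentwise: each g k has order p^(b_k) for some b_k <= a k. *)
Definition Rset (a : 'I_n -> nat) : {set G} :=
  [set g : G | [forall k, [exists b : 'I_(a k).+1, #[g k]%g == p ^ b]]].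

Definition Jset (i j : nat) : {set G} :=
  Rset (fun k : 'I_n => if i <= k then j else j - (lam i - lam k)).

Definition JG : {set {set G}} :=
  [set A | [exists i : 'I_n, exists j : 'I_(lam i).+1, (0 < j) && (A == Jset i j)]].

Definition D1 : {set {set G}} := [set Jset i 1 | i : 'I_n].

Definition D2 : {set {set G}} :=
  [set Jset n.-1 j | j : 'I_(lam n.-1 - lam n.-2).+1 & 0 < j].

End Defs.

Definition down_set_chain (T : finType) (P X : {set {set T}}) : bool :=
  [&& X \subset P,
      [forall A in X, forall B in X, (A \subset B) || (B \subset A)] &
      [forall A in P, forall B in X, (A \subset B) ==> (A \in X)]].

Definition maximal_down_set_chain (T : finType) (P X : {set {set T}}) : Prop :=
  down_set_chain P X /\
  forall Y : {set {set T}}, down_set_chain P Y -> X \subset Y -> Y = X.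

(* Main.v *)
Require Import Defs.
From mathcomp Require Import all_boot all_order all_algebra all_fingroup.
From mathcomp Require Import all_solvable zify.

Section R.
Variables (p n : nat) (lam : nat -> nat).
Hypothesis pP : prime p.
Hypothesis lam_pos : forall k : 'I_n, 0 < lam k.

Lemma p_gt1 : 1 < p. Proof. exact: prime_gt1. Qed.

Lemma card_Zpl (k : 'I_n) : (Zp_trunc (p ^ lam k)).+2 = p ^ lam k.
Proof. apply: Zp_cast; rewrite -(expn0 p) ltn_exp2l ?lam_pos //; exact: p_gt1. Qed.

Lemma ord_exp (k : 'I_n) (x : 'Z_(p ^ lam k)) :
  exists2 m, m <= lam k & #[x]%g = p ^ m.
Proof.
have : #[x]%g %| p ^ lam k.
  have := order_dvdG (in_setT x). by rewrite cardsT card_ord card_Zpl.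
by case/(@dvdn_pfactor p _ _ pP) => m Hm ->; exists m.
Qed.

Lemma inRset (a : 'I_n -> nat) g :
  (g \in Rset p lam a) = [forall k, #[g k]%g %| p ^ a k].
Proof.
rewrite inE; apply: eq_forallb => k.
apply/existsP/idP.
  by case=> b /eqP ->; rewrite dvdn_Pexp2l ?p_gt1 // -ltnS.
by case/(@dvdn_pfactor p _ _ pP) => m Hm ->; exists (Ordinal (Hm : m < (a k).+1)).
Qed.

Definition wit (k0 : 'I_n) (c : nat) : {dffun forall k : 'I_n, 'Z_(p ^ lam k)} :=
  @finfun _ (fun k : 'I_n => 'Z_(p ^ lam k))
   (fun k' : 'I_n => (Zp1 ^+ (p ^ (lam k' - (if k' == k0 then c else 0))))%g).

Lemma wit_ord (k : 'I_n) c (k' : 'I_n) : c <= lam k ->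
  #[wit k c k']%g = p ^ (if k' == k then c else 0).
Proof.
move=> Hc; rewrite /wit ffunE.
rewrite (@orderXexp _ p (lam k' - (if k' == k then c else 0)) (lam k')).
  case: eqP => [->|_]; congr (_ ^ _); lia.
by rewrite order_Zp1 card_Zpl.
Qed.

Lemma Rsub (a b : 'I_n -> nat) :
  (Rset p lam a \subset Rset p lam b) =
  [forall k, minn (a k) (lam k) <= minn (b k) (lam k)].
Proof.
apply/subsetP/forallP.
  move=> H k; apply/negPn/negP; rewrite -ltnNge => Hlt.
  set c := minn (a k) (lam k).
  have Hc : c <= lam k by rewrite /c; lia.
  have : wit k c \in Rset p lam a.
    rewrite inRset; apply/forallP => k'; rewrite wit_ord //.
    case: eqP => [->|_]; last by rewrite expn0 dvd1n.
    rewrite dvdn_Pexp2l ?p_gt1 // /c; lia.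
  move/H; rewrite inRset => /forallP /(_ k); rewrite wit_ord // eqxx.
  rewrite dvdn_Pexp2l ?p_gt1 //; rewrite /c in Hlt *; lia.
move=> H g; rewrite !inRset => /forallP Hg; apply/forallP => k.
have := Hg k; have := H k; case: (@ord_exp k (g k)) => m Hm ->.
rewrite !dvdn_Pexp2l ?p_gt1 //; lia.
Qed.

End R.

Set Implicit Arguments.
Section DSC.
Variables (T : finType) (P X : {set {set T}}).
Lemma dsc_sub : down_set_chain P X -> X \subset P.
Proof. by case/and3P. Qed.
Lemma dsc_chain : down_set_chain P X -> forall A B, A \in X -> B \in X ->
  (A \subset B) || (B \subset A).
Proof. by case/and3P => _ /forallP H _ A B AX BX; move: (H A); rewrite AX /= => /forallP /(_ B); rewrite BX. Qed.
Lemma dsc_down : down_set_chain P X -> forall A B, A \in P -> B \in X ->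
  A \subset B -> A \in X.
Proof. by case/and3P => _ _ /forallP H A B AP BX; move: (H A); rewrite AP /= => /forallP /(_ B); rewrite BX /= => /implyP. Qed.
Lemma dsc_intro : X \subset P ->
  (forall A B, A \in X -> B \in X -> (A \subset B) || (B \subset A)) ->
  (forall A B, A \in P -> B \in X -> A \subset B -> A \in X) ->
  down_set_chain P X.
Proof.
move=> H1 H2 H3; apply/and3P; split => //.
  by apply/forallP => A; apply/implyP => AX; apply/forallP => B; apply/implyP => BX; apply: H2.
by apply/forallP => A; apply/implyP => AP; apply/forallP => B; apply/implyP => BX; apply/implyP; apply: H3.
Qed.
End DSC.
Arguments dsc_sub {T P X}.
Arguments dsc_chain {T P X}.
Arguments dsc_down {T P X}.
Arguments dsc_intro {T P X}.

Definition ex (lam : nat -> nat) (i j k : nat) :=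
  minn (if i <= k then j else j - (lam i - lam k)) (lam k).

Lemma Jsub p n (lam : nat -> nat) (pP : prime p) (lp : forall k : 'I_n, 0 < lam k) (i j i' j' : nat) :
  (Jset p n lam i j \subset Jset p n lam i' j') =
  [forall k : 'I_n, ex lam i j k <= ex lam i' j' k].
Proof. by rewrite /Jset Rsub. Qed.

Ltac exsolve := rewrite /ex /=;
  repeat (let h := fresh "h" in case: ifP => h; try (move/negbT: h => h));
  intros; lia.

Theorem mainTheorem19 (p n : nat) (lam : nat -> nat) :
  prime p -> p != 2 ->
  0 < lam 0 ->
  (forall i, i.+1 < n -> lam i < lam i.+1) ->
  2 <= n ->
  2 <= lam n.-1 - lam n.-2 ->
  @D1 p n lam != @D2 p n lam /\
  (forall X : {set {set {dffun forall k : 'I_n, 'Z_(p ^ lam k)}}},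
     maximal_down_set_chain (@JG p n lam) X <-> X = @D1 p n lam \/ X = @D2 p n lam).
Proof.
move=> pP _ l0 hmon n2 hd.
have hl : forall i k, i <= k -> k < n -> lam i + (k - i) <= lam k.
  move=> i; elim=> [|k IH] ik kn; first by move: ik; rewrite leqn0 => /eqP ->; rewrite addn0.
  case: (ltngtP i k.+1) ik => // [ik|<-] _; last by rewrite subnn addn0.
  have := IH ik (ltnW kn); have := hmon k kn; lia.
have mono : forall a b : 'I_n, a <= b -> lam a + (b - a) <= lam b.
  by move=> a b ab; apply: hl ab (ltn_ord b).
have lp : forall k : 'I_n, 0 < lam k.
  move=> k; have := hl 0 k (leq0n _) (ltn_ord k); lia.
have JS := @Jsub p n lam pP lp.
set J := Jset p n lam.
have m_lt : n.-1 < n by lia.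
have q_lt : n.-2 < n by lia.
have z_lt : 0 < n by lia.
pose om := Ordinal m_lt. pose oq := Ordinal q_lt. pose o0 := Ordinal z_lt.
have lpm := lp om. have lpq := lp oq. have lp0 := lp o0.
rewrite /= in lpm lpq lp0.
have inJG : forall A, A \in JG p n lam ->
   exists i : 'I_n, exists2 j, 0 < j <= lam i & A = J i j.
  move=> A; rewrite inE => /existsP [i /existsP [j /andP [j0 /eqP ->]]].
  by exists i, j => //; rewrite j0 -ltnS ltn_ord.
have JGin : forall (i : 'I_n) j, 0 < j <= lam i -> J i j \in JG p n lam.
  move=> i j /andP [j0 jl]; rewrite inE; apply/existsP; exists i; apply/existsP.
  by exists (Ordinal (jl : j < (lam i).+1)); rewrite j0 eqxx.
have D1in : forall (i : 'I_n), J i 1 \in D1 p n lam.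
  by move=> i; apply/imsetP; exists i.
have D1P : forall A, A \in D1 p n lam -> exists i : 'I_n, A = J i 1.
  by move=> A /imsetP [i _ ->]; exists i.
have D2in : forall j, 0 < j <= lam n.-1 - lam n.-2 -> J n.-1 j \in D2 p n lam.
  move=> j /andP [j0 jd]; apply/imsetP.
  by exists (Ordinal (jd : j < (lam n.-1 - lam n.-2).+1)) => //; rewrite inE.
have D2P : forall A, A \in D2 p n lam ->
     exists2 j, 0 < j <= lam n.-1 - lam n.-2 & A = J n.-1 j.
  move=> A /imsetP [j]; rewrite inE => j0 ->; exists j => //.
  by rewrite j0 -ltnS ltn_ord.
have Jm2G : J n.-1 2 \in JG p n lam by apply: (JGin om); rewrite /=; clear - hd; lia.
have Jq1G : J n.-2 1 \in JG p n lam by apply: (JGin oq); rewrite /=; clear - lpq; lia.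
have incomp : ~~ ((J n.-1 2 \subset J n.-2 1) || (J n.-2 1 \subset J n.-1 2)).
  rewrite !JS negb_or; apply/andP; split; apply/negP => /forallP H.
    by move: (H om); clear - hd n2 lpm lpq lp0; exsolve.
  by move: (H oq); clear - hd n2 lpm lpq lp0; exsolve.
have key : forall X, down_set_chain (JG p n lam) X ->
    X \subset D1 p n lam \/ X \subset D2 p n lam.
  move=> X dX; case: (boolP (X \subset D1 p n lam)) => [h|nD1]; [by left|right].
  apply/subsetP => B BX; apply/negPn/negP => nB.
  move/subsetPn: nD1 => [A AX nA].
  have [i [j /andP [j0 jl] EA]] := inJG A (subsetP (dsc_sub dX) A AX).
  have j2 : 1 < j.
    rewrite ltn_neqAle j0 andbT eq_sym; apply: contraNneq nA => j1.
    by rewrite EA j1 D1in.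
  have XA : J n.-1 2 \in X.
    apply: (dsc_down dX _ _ Jm2G AX); rewrite EA JS; apply/forallP => k.
    move: (mono k oq) (mono i k) (ltn_ord k) (ltn_ord i) j2 jl; clear - hd n2 lpm lpq lp0; exsolve.
  have [i' [j' /andP [j0' jl'] EB]] := inJG B (subsetP (dsc_sub dX) B BX).
  have nd : (i' < n.-1) \/ (lam n.-1 - lam n.-2 < j').
    case: (ltngtP i' n.-1) => [|h|h]; [by left| |]; first by have := ltn_ord i'; clear - h n2; lia.
    case: (leqP j' (lam n.-1 - lam n.-2)) => [jd|]; [|by right].
    by move: nB; rewrite EB h D2in // j0'.
  have XB : J n.-2 1 \in X.
    apply: (dsc_down dX _ _ Jq1G BX); rewrite EB JS; apply/forallP => k.
    move: (mono k oq) (mono oq k) (mono i' om) (mono om i') (lp k) (ltn_ord k) (ltn_ord i') nd j0' jl'.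
    clear - hd n2 lpm lpq lp0; exsolve.
  by have := dsc_chain dX _ _ XA XB; rewrite (negbTE incomp).
have dD1 : down_set_chain (JG p n lam) (D1 p n lam).
  apply: dsc_intro.
  - by apply/subsetP => A /D1P [i ->]; apply: JGin; have := lp i.
  - move=> A B /D1P [i ->] /D1P [i' ->]; rewrite !JS.
    case: (leqP i i') => ii; apply/orP; [right|left]; apply/forallP => k;
      move: (mono k i) (mono k i') (ltn_ord k) (ltn_ord i) (ltn_ord i') ii (lp k); clear - hd n2 lpm lpq lp0; exsolve.
  - move=> A B /inJG [i' [j' /andP [j0' jl'] ->]] /D1P [i ->].
    rewrite JS => /forallP /(_ om) H.
    have -> : j' = 1.
      move: H (mono i' om) (ltn_ord i) (ltn_ord i') j0' jl'; clear - hd n2 lpm lpq lp0; exsolve.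
    exact: D1in.
have dD2 : down_set_chain (JG p n lam) (D2 p n lam).
  apply: dsc_intro.
  - apply/subsetP => A /D2P [j /andP [j0 jd] ->]; apply: (JGin om) => /=.
    by move: j0 jd; clear - hd; intros; lia.
  - move=> A B /D2P [j /andP [j0 jd] ->] /D2P [j' /andP [j0' jd'] ->]; rewrite !JS.
    case: (leqP j j') => ii; apply/orP; [left|right]; apply/forallP => k;
      move: (mono k oq) (ltn_ord k) ii j0 jd j0' jd'; clear - hd n2 lpm lpq lp0; exsolve.
  - move=> A B /inJG [i' [j' /andP [j0' jl'] ->]] /D2P [j /andP [j0 jd] ->].
    rewrite JS => /forallP H.
    have Hi : nat_of_ord i' = n.-1.
      move: (H i') (mono i' oq) (ltn_ord i') j0' jd (lp i'); clear - hd n2 lpm lpq lp0; exsolve.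
    have Hj : j' <= j.
      rewrite Hi in jl'; move: (H om) jl' j0'; rewrite Hi; clear - hd n2 lpm lpq lp0; exsolve.
    by rewrite Hi; apply: D2in; rewrite j0' (leq_trans Hj jd).
have J01 : J 0 1 \in D1 p n lam := D1in o0.
have J01n : J 0 1 \notin D2 p n lam.
  apply/negP => /D2P [j /andP [j0 jd] E].
  have : J 0 1 \subset J n.-1 j by rewrite E.
  rewrite JS => /forallP /(_ o0); move: (mono o0 oq) j0 jd; clear - hd n2 lpm lpq lp0; exsolve.
have Jm2 : J n.-1 2 \in D2 p n lam by apply: D2in; clear - hd; lia.
have Jm2n : J n.-1 2 \notin D1 p n lam.
  apply/negP => /D1P [i E].
  have : J n.-1 2 \subset J i 1 by rewrite E.
  rewrite JS => /forallP /(_ om); move: (ltn_ord i); clear - hd n2 lpm lpq lp0; exsolve.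
split.
  by apply/eqP => E; move: J01n; rewrite -E J01.
move=> X; split.
  case=> dX maxX; case: (key X dX) => sX; [left|right]; apply/esym/maxX => //.
have maxD : forall D, down_set_chain (JG p n lam) D ->
    (D \subset D1 p n lam -> D = D1 p n lam) -> (D \subset D2 p n lam -> D = D2 p n lam) ->
    maximal_down_set_chain (JG p n lam) D.
  move=> D dD h1 h2; split => // Y dY DY.
  case: (key Y dY) => sY.
    by rewrite (h1 (subset_trans DY sY)); apply/eqP; rewrite eqEsubset sY -(h1 (subset_trans DY sY)).
  by rewrite (h2 (subset_trans DY sY)); apply/eqP; rewrite eqEsubset sY -(h2 (subset_trans DY sY)).
case=> ->; apply: maxD => // sD.
  by move: J01n; rewrite (subsetP sD _ J01).
by move: Jm2n; rewrite (subsetP sD _ Jm2).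
Qed.
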